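(* Let $\mathcal G$ be a constructor GRS over a finite signature $\mathcal F$ that is precedence terminating with argument separation, and let $d\in\mathbb N$ with $d\ge\max\big(\{\mathrm{ar}(f):f\in\mathcal F\}\cup\{|K{\restriction}r|:(K,l,r)\in\mathcal G_{\mathrm{fin}}\}\big)$. Suppose every rule $(K,l,r)\in\mathcal G_{\mathrm{inf}}$ satisfies conditions (i)–(iv) below. Then for every closed basic term graph $G_0\in\mathcal{TG}(\mathcal F)$ and every $n\in\mathbb N$, if $G_0\to^n_{\mathcal G}G$ then $|G|\le|G_0|+n\cdot\big(\big|\bigcup_{v\in\mathrm{nrm}(\rho_{G_0})}V_{G_0\restriction v}\big|+2d\big)$. Conditions: (i) $(K{\restriction}l)\cap\mathrm{nrm}$ is maximally shared; (ii) $K{\restriction}v$ is closed for every labeled node $v\in\mathrm{nrm}(l)$; (iii) $\big|\{v\in\mathrm{nrm}(l):v\text{ unlabeled}\}\cup\bigcup_{v\in\mathrm{safe}(l)}V_{K\restriction v}\big|\le d$; (iv) $|K{\restriction}r|\le|K{\restriction}l|+\big|\bigcup_{v\in\mathrm{nrm}(r)}V_{K\restriction v}\big|$.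
   Context: Term graphs. $\mathcal F=\mathcal C\cup\mathcal D$ is a finite signature (constructors and defined symbols, disjoint) with arity function $\mathrm{ar}$. A labeled graph consists of a finite acyclic directed graph $(V_G,E_G)$, a partial labeling $\mathrm{lab}_G:V_G\to\mathcal F$ and a successor function $\mathrm{att}_G:V_G\to V_G^*$ such that $\mathrm{att}_G(v)$ has length $\mathrm{ar}(\mathrm{lab}_G(v))$ if $v$ is labeled and is empty otherwise, and the set of entries of $\mathrm{att}_G(v)$ equals $\{u:(v,u)\in E_G\}$. Unlabeled nodes act as variables. A term graph additionally has a root $\rho_G$ from which every node is reachable; $\mathcal{TG}(\mathcal F)$ is the set of term graphs over $\mathcal F$, $\mathcal{TG}(\mathcal C)$ those whose labeled nodes carry constructors. $G{\restriction}v$ is the sub-term graph of nodes reachable from $v$, rooted at $v$; $H\subseteq G$ means $H=G{\restriction}v$ for some $v$. $|G|=|V_G|$. $G$ is closed if every node is labeled; basic if $\mathrm{lab}_G(\rho_G)\in\mathcal D$ and $G{\restriction}v\in\mathcal{TG}(\mathcal C)$ for every successor $v$ of $\rho_G$. Choosing an injective map from unlabeled nodes to variables, each $G{\restriction}v$ has a term representation $\mathrm{term}(G{\restriction}v)$; $G$ is maximally shared if $\mathrm{term}(G{\restriction}u)=\mathrm{term}(G{\restriction}v)$ implies $u=v$. Argument separation. The argument positions of each $f\in\mathcal F$ are split into normal and safe ones; constructors have only safe positions; nodes with the same label have the same separation. $\mathrm{nrm}(v)$ (resp. $\mathrm{safe}(v)$) is the set of successors of $v$ at normal (resp. safe) positions.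 $H\sqsubset_{\mathrm{nrm}}G$ means $H\subseteq G{\restriction}v$ for some $v\in\mathrm{nrm}(\rho_G)$. For $G$ with $\mathrm{att}_G(\rho_G)=v_1,\dots,v_k;v_{k+1},\dots,v_{k+l}$, $G\cap\mathrm{nrm}$ is the term graph with root $\rho_G$ whose nodes are $\rho_G$, the nodes of $G{\restriction}v$ for $v\in\mathrm{nrm}(\rho_G)$ (with labels and successors from $G$), and $l$ fresh unlabeled nodes $u_1,\dots,u_l$, with $\mathrm{att}(\rho_G)=v_1,\dots,v_k;u_1,\dots,u_l$ (if no safe successor of the root is labeled, $G\cap\mathrm{nrm}=G$). Rewriting. Homomorphisms of labeled graphs preserve labels, successor sequences at labeled nodes (nothing required at unlabeled nodes) and the normal/safe split. A graph rewrite rule $(K,l,r)$ is a labeled graph $K$ with distinct nodes $l,r$ such that every unlabeled node of $K{\restriction}r$ lies in $K{\restriction}l$; it is a constructor rule if $K{\restriction}l$ is basic. A GRS is a (possibly infinite) set of rules; a constructor GRS consists of constructor rules. For a rule $(K,l,r)$ and homomorphism $\varphi:K{\restriction}l\to G$, the step $G\to_{\mathcal G}H$ is the standard build/redirection/garbage-collection step replacing $G{\restriction}\varphi(l)$ by an instance of $K{\restriction}r$ (new labeled nodes are fresh copies, unlabeled nodes are mapped via $\varphi$, edges into $\varphi(l)$ are redirected to the image of $r$, unreachable nodes removed). $\to^n_{\mathcal G}$ is the $n$-fold iteration. $\mathcal D_{\mathrm{inf}}$ is the set of defined symbols labeling the left root of infinitely many rules of $\mathcal G$, $\mathcal D_{\mathrm{fin}}=\mathcal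 D\setminus\mathcal D_{\mathrm{inf}}$; $\mathcal G_{\mathrm{inf}}=\{(K,l,r)\in\mathcal G:\mathrm{lab}_K(l)\in\mathcal D_{\mathrm{inf}}\}$, $\mathcal G_{\mathrm{fin}}=\mathcal G\setminus\mathcal G_{\mathrm{inf}}$. Precedence termination with argument separation. A precedence $\sqsubset$ is a well-founded strict partial order on $\mathcal F$ with all constructors minimal. $H\sqsubset_{\mathrm{pt}}G$ holds if $\mathrm{lab}_H(v)\sqsubset\mathrm{lab}_G(\rho_G)$ for every labeled node $v$ of $H$ and either (1) $H=G{\restriction}u$ or $H\sqsubset_{\mathrm{pt}}G{\restriction}u$ for some successor $u$ of $\rho_G$; or (2) $\rho_H$ is labeled, $H{\restriction}v\sqsubset_{\mathrm{nrm}}G$ for each $v\in\mathrm{nrm}(\rho_H)$, and $H{\restriction}v\sqsubset_{\mathrm{pt}}G$ for each $v\in\mathrm{safe}(\rho_H)$. $\mathcal G$ is precedence terminating with argument separation if for some separation and precedence, $K{\restriction}r\sqsubset_{\mathrm{pt}}K{\restriction}l$ for every rule. *)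

(* Defs.v *)
From mathcomp Require Import all_boot.
Set Implicit Arguments.
Unset Strict Implicit.
Unset Printing Implicit Defensive.

Section TermGraphs.

(* Argument separation: the first
   nn f argument positions of f are normal, the remaining ones are safe. *)
Variable F : finType.
Variable ar : F -> nat.
Variable isC : pred F.
Variable nn : F -> nat.

(* A labeled graph is a finite list of entries (node, (label, successors));
   nodes are natural numbers; unlabeled nodes (label None) act as variables. *)
Definition entry := (nat * (option F * seq nat))%type.
Definition lgraph := seq entry.

Definition nodes (G : lgraph) : seq nat := map fst G.
Definition entry_of (G : lgraph) (v : nat) : entry :=
  nth (v, (None, [::])) G (find (fun e : entry => e.1 == v) G).
Definition lab (G : lgraph) (v : nat) : option F := (entry_of G v).2.1.
Definition att (G : lgraph) (v : nat) : seq nat := (entry_of G v).2.2.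

Inductive tc (G : lgraph) : nat -> nat -> Prop :=
| tc1 v w : w \in att G v -> tc G v w
| tcS v u w : u \in att G v -> tc G u w -> tc G v w.

Definition arity_of (o : option F) : nat :=
  if o is Some f then ar f else 0.

Definition lgraph_wf (G : lgraph) : Prop :=
  [/\ uniq (nodes G),
      (forall v, v \in nodes G -> {subset att G v <= nodes G}),
      (forall v, v \in nodes G -> size (att G v) = arity_of (lab G v)) &
      (forall v, ~ tc G v v)].

(* Reachability (reflexive): explores all paths of length <= |G|+1, which
   covers every simple path, hence is exact reachability. *)
Fixpoint rch (G : lgraph) (n : nat) (v : nat) : seq nat :=
  if n is n'.+1 then v :: flatten [seq rch G n' w | w <- att G v] else [:: v].
Definition reachb (G : lgraph) (v w : nat) : bool := w \in rch G (size G).+1 v.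

Definition Vsub (G : lgraph) (v : nat) : seq nat :=
  [seq u <- nodes G | reachb G v u].

Record tgraph := TG { tg : lgraph; rootg : nat }.

Definition is_tg (T : tgraph) : Prop :=
  [/\ lgraph_wf (tg T), rootg T \in nodes (tg T) &
      forall u, u \in nodes (tg T) -> reachb (tg T) (rootg T) u].

Definition size_tg (T : tgraph) : nat := size (nodes (tg T)).

Definition subg (G : lgraph) (v : nat) : tgraph :=
  TG [seq e <- G | reachb G v e.1] v.
Definition subt (T : tgraph) (v : nat) : tgraph := subg (tg T) v.

Definition tg_eq (H G : tgraph) : Prop :=
  [/\ rootg H = rootg G, perm_eq (nodes (tg H)) (nodes (tg G)) &
      forall v, v \in nodes (tg H) ->
        lab (tg H) v = lab (tg G) v /\ att (tg H) v = att (tg G) v].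

Definition nrmv (G : lgraph) (v : nat) : seq nat :=
  if lab G v is Some f then take (nn f) (att G v) else [::].
Definition safev (G : lgraph) (v : nat) : seq nat :=
  if lab G v is Some f then drop (nn f) (att G v) else [::].

Definition closed_tg (T : tgraph) : Prop :=
  forall v, v \in nodes (tg T) -> lab (tg T) v != None.

Definition constr_tg (T : tgraph) : Prop :=
  forall v f, v \in nodes (tg T) -> lab (tg T) v = Some f -> isC f.

Definition basic (T : tgraph) : Prop :=
  (exists f, lab (tg T) (rootg T) = Some f /\ ~~ isC f) /\
  forall v, v \in att (tg T) (rootg T) -> constr_tg (subt T v).

Inductive term := Var of nat | App of F & list term.

Fixpoint toterm (G : lgraph) (n : nat) (v : nat) : term :=
  if n is n'.+1 then
    if lab G v is Some f then App f [seq toterm G n' w | w <- att G v]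
    else Var v
  else Var v.
Definition term_of (T : tgraph) (v : nat) : term :=
  toterm (tg (subt T v)) (size (tg T)).+1 v.

Definition max_shared (T : tgraph) : Prop :=
  forall u v, u \in nodes (tg T) -> v \in nodes (tg T) ->
    term_of T u = term_of T v -> u = v.

Definition cap_nrm (T : tgraph) : tgraph :=
  let G := tg T in let rho := rootg T in
  if lab G rho is Some f then
    let a := att G rho in let k := nn f in
    if has (fun v => lab G v != None) (drop k a) then
      let m := (foldr maxn 0 (nodes G)).+1 in
      let fresh := [seq m + i | i <- iota 0 (size a - k)] in
      let keep := [seq e <- G | has (fun v => reachb G v e.1) (take k a)
                                && (e.1 != rho)] in
      TG ((rho, (Some f, take k a ++ fresh)) :: keep
            ++ [seq (u, (None, [::])) | u <- fresh]) rho
    else T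
  else T.

Definition subtg (H G : tgraph) : Prop :=
  exists v, v \in nodes (tg G) /\ tg_eq H (subt G v).

Definition sqsub_nrm (H G : tgraph) : Prop :=
  exists v, v \in nrmv (tg G) (rootg G) /\ subtg H (subt G v).

Section Precedence.
Variable prec : rel F.

Definition below (H G : tgraph) : Prop :=
  forall v g, v \in nodes (tg H) -> lab (tg H) v = Some g ->
    exists f, lab (tg G) (rootg G) = Some f /\ prec g f.

Inductive pt : tgraph -> tgraph -> Prop :=
| pt_sub H G u : below H G -> u \in att (tg G) (rootg G) ->
    (tg_eq H (subt G u) \/ pt H (subt G u)) -> pt H G
| pt_comp H G f : below H G -> lab (tg H) (rootg H) = Some f ->
    (forall v, v \in nrmv (tg H) (rootg H) -> sqsub_nrm (subt H v) G) ->
    (forall v, v \in safev (tg H) (rootg H) -> pt (subt H v) G) -> pt H G.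

Definition precedence : Prop :=
  [/\ irreflexive prec, transitive prec, well_founded (fun a b => prec a b) &
      forall c g, isC c -> ~~ prec g c].
End Precedence.

Definition rule := (lgraph * nat * nat)%type.
Definition rK (R : rule) : lgraph := R.1.1.
Definition rl (R : rule) : nat := R.1.2.
Definition rr (R : rule) : nat := R.2.

Definition rule_wf (R : rule) : Prop :=
  [/\ lgraph_wf (rK R), rl R \in nodes (rK R), rr R \in nodes (rK R),
      rl R != rr R &
      forall u, u \in Vsub (rK R) (rr R) -> lab (rK R) u = None ->
        u \in Vsub (rK R) (rl R)].

Definition lhsg (R : rule) : tgraph := subg (rK R) (rl R).
Definition rhsg (R : rule) : tgraph := subg (rK R) (rr R).

Definition constructor_rule (R : rule) : Prop := basic (lhsg R).

Definition GRS := rule -> Prop.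

Definition D_inf (S : GRS) (f : F) : Prop :=
  ~ exists s : seq rule, forall R, S R -> lab (rK R) (rl R) = Some f -> R \in s.
Definition in_Ginf (S : GRS) (R : rule) : Prop :=
  exists f, lab (rK R) (rl R) = Some f /\ D_inf S f.

Definition homo (K : lgraph) (l : nat) (G : lgraph) (phi : nat -> nat) : Prop :=
  forall u, u \in Vsub K l ->
    phi u \in nodes G /\
    forall f, lab K u = Some f ->
      lab G (phi u) = Some f /\ att G (phi u) = map phi (att K u).

(* result of the rewrite step (build, redirection, garbage collection),
   with fresh names c u for the nodes of K|r not in K|l *)
Definition step_result (R : rule) (T : tgraph) (phi c : nat -> nat) : tgraph :=
  let K := rK R in let l := rl R in let r := rr R in let G := tg T in
  let img u := if u \in Vsub K l then phi u else c u in
  let new := [seq u <- Vsub K r | u \notin Vsub K l] in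
  let B := G ++ [seq (c u, (lab K u, map img (att K u))) | u <- new] in
  let redir w := if w == phi l then img r else w in
  let B' := [seq (e.1, (e.2.1, map redir e.2.2)) | e <- B] in
  subg B' (redir (rootg T)).

Definition fresh_ok (R : rule) (T : tgraph) (c : nat -> nat) : Prop :=
  let new := [seq u <- Vsub (rK R) (rr R) | u \notin Vsub (rK R) (rl R)] in
  {in new &, injective c} /\ forall u, u \in new -> c u \notin nodes (tg T).

Definition step (S : GRS) (T H : tgraph) : Prop :=
  exists R phi c, [/\ S R, homo (rK R) (rl R) (tg T) phi, fresh_ok R T c &
                      tg_eq H (step_result R T phi c)].

Fixpoint steps (S : GRS) (n : nat) (T H : tgraph) : Prop :=
  if n is n'.+1 then exists T', step S T T' /\ steps S n' T' H else H = T.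

Definition Vunion (G : lgraph) (vs : seq nat) : seq nat :=
  undup (flatten [seq Vsub G v | v <- vs]).

End TermGraphs.

(* Main.v *)
Require Import Defs.
From mathcomp Require Import all_boot.
From Stdlib Require Import Classical.
Set Implicit Arguments. Unset Strict Implicit. Unset Printing Implicit Defensive.


Section Lib.
Variable F : finType.
Implicit Types (G M : lgraph F).

Lemma entry_of_notin G x : x \notin nodes G -> entry_of G x = (x, (None, [::])).
Proof.
move=> H; rewrite /entry_of nth_default //. rewrite leqNgt -has_find.
apply/negP => /hasP [e eG /eqP ex]. case/negP: H; apply/mapP; exists e => //.
Qed.

Lemma lab_notin G x : x \notin nodes G -> lab G x = None.
Proof. by move=> H; rewrite /lab entry_of_notin. Qed.
Lemma att_notin G x : x \notin nodes G -> att G x = [::].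
Proof. by move=> H; rewrite /att entry_of_notin. Qed.
Lemma lab_mem G x f : lab G x = Some f -> x \in nodes G.
Proof. by case: (boolP (x \in nodes G)) => // /lab_notin ->. Qed.
Lemma att_mem G x y : y \in att G x -> x \in nodes G.
Proof. by case: (boolP (x \in nodes G)) => // /att_notin ->. Qed.

Lemma entry_of_cons e G x :
  entry_of (e :: G) x = if e.1 == x then e else entry_of G x.
Proof. by rewrite /entry_of /=; case: ifP. Qed.

Lemma entry_of_cat G1 G2 x : entry_of (G1 ++ G2) x =
  if x \in nodes G1 then entry_of G1 x else entry_of G2 x.
Proof.
elim: G1 => [|e G1 IH] //=. rewrite !entry_of_cons in_cons eq_sym.
by case: eqP => //= ne; rewrite IH.
Qed.

Lemma entry_of_filter (p : pred nat) G x : p x ->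
  entry_of [seq e <- G | p e.1] x = entry_of G x.
Proof.
move=> px; elim: G => [|e G IH] //=. case: ifP => pe.
  by rewrite !entry_of_cons IH.
rewrite entry_of_cons IH; case: eqP => // ex. by rewrite ex px in pe.
Qed.

Lemma entry_of_map (g : entry F -> entry F) G x :
  (forall e, (g e).1 = e.1) -> x \in nodes G ->
  entry_of (map g G) x = g (entry_of G x).
Proof.
move=> Hg; elim: G => [|e G IH] //= xin. rewrite !entry_of_cons Hg.
case: eqP => // ne; apply: IH. move: xin; rewrite in_cons.
by case/orP => // /eqP ex; case: ne.
Qed.

Lemma nodes_map (g : entry F -> entry F) G :
  (forall e, (g e).1 = e.1) -> nodes (map g G) = nodes G.
Proof. by move=> Hg; rewrite /nodes -map_comp; apply: eq_map => e /=; rewrite Hg. Qed.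

Lemma nodes_filter (p : pred nat) G :
  nodes [seq e <- G | p e.1] = [seq u <- nodes G | p u].
Proof. by rewrite /nodes filter_map. Qed.

Lemma nodes_cat G1 G2 : nodes (G1 ++ G2) = nodes G1 ++ nodes G2.
Proof. by rewrite /nodes map_cat. Qed.

Definition edge G : rel nat := fun x y => y \in att G x.
Definition reach G a z := exists p, path (edge G) a p /\ last a p = z.

Lemma rch_iff G n a z : z \in rch G n a <->
  exists p, [/\ path (edge G) a p, last a p = z & size p <= n].
Proof.
elim: n a => [|n IH] a /=.
  rewrite mem_seq1; split => [/eqP->|[[|x p] []]]; first by exists [::].
    by move=> _ <- _.
  by [].
rewrite in_cons; split.
  case/orP => [/eqP->|/flatten_mapP [x xa /IH [p [pp lp sp]]]]; first by exists [::].
  by exists (x :: p); split => //=; rewrite pp andbT.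
case=> [[|x p]] [] /=; first by move=> _ ->; rewrite eqxx.
case/andP => xa pp lp sp; apply/orP; right; apply/flatten_mapP; exists x => //.
by apply/IH; exists p.
Qed.

Lemma belast_nodes G a p : path (edge G) a p -> {subset belast a p <= nodes G}.
Proof.
elim: p a => [|x p IH] a //= /andP [ax pp] y; rewrite in_cons.
case/orP => [/eqP->|]; [exact: att_mem ax | exact: IH].
Qed.

Lemma reachbP G a z : reflect (reach G a z) (reachb G a z).
Proof.
apply: (iffP idP).
  by move/rch_iff => [p [pp lp _]]; exists p.
case=> p [pp lp]; apply/rch_iff.
case: (shortenP pp) lp => p' pp' up' _ lp'.
exists p'; split => //. apply: leqW.
rewrite -(size_belast a) -(size_map fst G) -/(nodes G).
apply: uniq_leq_size; last exact: belast_nodes pp'.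
by move: up'; rewrite lastI rcons_uniq => /andP [].
Qed.

Lemma reach_refl G a : reach G a a.
Proof. by exists [::]. Qed.
Lemma reach_trans G a b c : reach G a b -> reach G b c -> reach G a c.
Proof.
case=> p [pp <-] [q [pq <-]]; exists (p ++ q).
by rewrite cat_path pp pq last_cat.
Qed.
Lemma reach_cons G a b c : b \in att G a -> reach G b c -> reach G a c.
Proof. by move=> ab [p [pp <-]]; exists (b :: p); rewrite /= pp andbT. Qed.
Lemma reach_edge G a b : b \in att G a -> reach G a b.
Proof. by move=> ab; apply: reach_cons ab (reach_refl _ _). Qed.

Lemma reach_split G a z : reach G a z ->
  z = a \/ exists2 x, x \in att G a & reach G x z.
Proof.
case=> [[|x p]] [] /=; first by left.
by case/andP => ax pp lp; right; exists x => //; exists p.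
Qed.

Lemma reach_ind G (P : nat -> Prop) a :
  P a -> (forall x y, reach G a x -> P x -> y \in att G x -> P y) ->
  forall z, reach G a z -> P z.
Proof.
move=> Pa Hs z [p [pp <-]].
elim/last_ind: p pp => [|p y IH] //=.
rewrite -cats1 cat_path last_cat /= andbT => /andP [pp e].
apply: (Hs (last a p)) => //; last by apply: IH.
by exists p.
Qed.

Lemma reach_nodes G a z :
  (forall x, x \in nodes G -> {subset att G x <= nodes G}) ->
  a \in nodes G -> reach G a z -> z \in nodes G.
Proof.
move=> Hc an; move: z; apply: (@reach_ind G (fun z => z \in nodes G) a) => //.
move=> x y _ xn yx; exact: Hc x xn y yx.
Qed.

Lemma reach_agree M G (S : pred nat) a z : a \in S ->
  (forall x, x \in S -> att M x = att G x) ->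
  (forall x y, x \in S -> y \in att G x -> y \in S) ->
  reach M a z -> reach G a z /\ z \in S.
Proof.
move=> aS Hatt Hcl; move: z.
apply: (@reach_ind M (fun z => reach G a z /\ z \in S) a).
  by split=> //; apply: reach_refl.
move=> x y _ [rx xS]; rewrite Hatt // => yx; split.
  by apply: reach_trans rx (reach_edge yx).
exact: Hcl yx.
Qed.

Lemma reach_agree2 M G (S : pred nat) a z : a \in S ->
  (forall x, x \in S -> att M x = att G x) ->
  (forall x y, x \in S -> y \in att G x -> y \in S) ->
  reach M a z <-> reach G a z.
Proof.
move=> aS Hatt Hcl; split => [/(reach_agree aS Hatt Hcl) []//|].
move=> H.
have h1 : forall x, x \in S -> att G x = att M x by move=> x xS; rewrite Hatt.
have h2 : forall x y, x \in S -> y \in att M x -> y \in S.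
  by move=> x y xS; rewrite Hatt //; apply: Hcl.
by case: (@reach_agree G M S a z aS h1 h2 H).
Qed.

Lemma subg_entry G v x : reachb G v x -> entry_of (tg (subg G v)) x = entry_of G x.
Proof. by move=> H; rewrite /subg /= (@entry_of_filter (reachb G v)). Qed.
Lemma subg_lab G v x : reachb G v x -> lab (tg (subg G v)) x = lab G x.
Proof. by move=> H; rewrite /lab subg_entry. Qed.
Lemma subg_att G v x : reachb G v x -> att (tg (subg G v)) x = att G x.
Proof. by move=> H; rewrite /att subg_entry. Qed.
Lemma subg_nodes G v : nodes (tg (subg G v)) = Vsub G v.
Proof. by rewrite /subg /= nodes_filter. Qed.
Lemma subg_nreach G v x : ~~ reachb G v x -> x \notin nodes (tg (subg G v)).
Proof. by move=> H; rewrite subg_nodes mem_filter negb_and H. Qed.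

Lemma reach_subg G v a z : reach G v a ->
  (reach (tg (subg G v)) a z <-> reach G a z).
Proof.
move=> va; apply: (@reach_agree2 _ _ (reachb G v)).
- exact/reachbP.
- by move=> x xS; rewrite subg_att.
- move=> x y /reachbP xS yx; apply/reachbP; exact: reach_trans xS (reach_edge yx).
Qed.

End Lib.


Section Lib2.
Variable F : finType.
Implicit Types (G M : lgraph F).

Lemma path_agree M G (S : pred nat) a p : a \in S ->
  (forall x, x \in S -> att M x = att G x) ->
  (forall x y, x \in S -> y \in att G x -> y \in S) ->
  path (edge M) a p -> path (edge G) a p /\ all (mem S) p.
Proof.
move=> + Hatt Hcl; elim: p a => [|x p IH] a aS //= /andP [ax pp].
have ax' : x \in att G a by rewrite -Hatt.
have xS := Hcl _ _ aS ax'.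
by case: (IH x xS pp) => -> ->; rewrite /edge ax' xS.
Qed.

Lemma path_mem_reach G a p y : path (edge G) a p -> y \in a :: p -> reach G a y.
Proof.
elim: p a => [|x p IH] a /=.
  by rewrite mem_seq1 => _ /eqP ->; apply: reach_refl.
case/andP => ax pp; rewrite in_cons; case/orP => [/eqP->|yp].
  exact: reach_refl.
by apply: reach_cons ax _; apply: IH.
Qed.

Lemma path_tc G a x p : path (edge G) a (x :: p) -> tc G a (last x p).
Proof.
elim: p a x => [|y p IH] a x /=; first by rewrite andbT => ax; apply: tc1.
case/andP => ax yp; apply: tcS ax _; apply: IH; exact: yp.
Qed.

Lemma reach_tc G a x z : x \in att G a -> reach G x z -> tc G a z.
Proof. by move=> ax [p [pp <-]]; apply: path_tc; rewrite /= pp andbT. Qed.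

Lemma path_uniq_acyc G a p : (forall v, ~ tc G v v) ->
  path (edge G) a p -> uniq (a :: p).
Proof.
move=> Hac; elim: p a => [|x p IH] a //= /andP [ax pp].
have := IH x pp; rewrite /= => ->; rewrite andbT in_cons.
apply/negP => ain; apply: (Hac a); apply: reach_tc ax _.
by apply: path_mem_reach pp _; rewrite in_cons.
Qed.

Lemma map_eq2 (T1 : Type) (f1 f2 : nat -> T1) (ph : nat -> nat) s1 s2 :
  map ph s1 = map ph s2 ->
  (forall x1 x2, x1 \in s1 -> x2 \in s2 -> ph x1 = ph x2 -> f1 x1 = f2 x2) ->
  map f1 s1 = map f2 s2.
Proof.
elim: s1 s2 => [|x1 s1 IH] [|x2 s2] //= [e es] H.
rewrite (H x1 x2) ?mem_head // (IH s2) // => y1 y2 y1s y2s.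
by apply: H; rewrite in_cons ?y1s ?y2s orbT.
Qed.

Section TermEq.
Variables (K T : lgraph F) (phi : nat -> nat) (Lab : pred nat).
Hypothesis HL1 : forall z, z \in Lab -> lab K z != None.
Hypothesis HL2 : forall z, z \in Lab ->
  lab T (phi z) = lab K z /\ att T (phi z) = map phi (att K z).

Lemma toterm_eq k M1 M2 a1 a2 :
  (forall z, reach M1 a1 z -> [/\ z \in Lab, lab M1 z = lab K z & att M1 z = att K z]) ->
  (forall z, reach M2 a2 z -> [/\ z \in Lab, lab M2 z = lab K z & att M2 z = att K z]) ->
  (forall p, path (edge M1) a1 p -> size p < k) ->
  (forall p, path (edge M2) a2 p -> size p < k) ->
  phi a1 = phi a2 -> toterm M1 k a1 = toterm M2 k a2.
Proof.
elim: k M1 M2 a1 a2 => [|k IH] M1 M2 a1 a2 H1 H2 P1 P2 e.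
  by have := P1 [::] isT.
have [a1L la1 aa1] := H1 a1 (reach_refl _ _).
have [a2L la2 aa2] := H2 a2 (reach_refl _ _).
have [lt1 at1] := HL2 a1L; have [lt2 at2] := HL2 a2L.
have nn1 := HL1 a1L.
rewrite /= la1 la2 -lt1 -lt2 e.
case E: (lab T (phi a2)) => [f|]; last by move: nn1; rewrite -lt1 e E.
f_equal.
rewrite aa1 aa2; apply: (@map_eq2 _ _ _ phi).
  by rewrite -at1 -at2 e.
move=> x1 x2 x1s x2s ex; apply: IH => //.
- by move=> z r; apply: H1; apply: reach_cons r; rewrite aa1.
- by move=> z r; apply: H2; apply: reach_cons r; rewrite aa2.
- by move=> p pp; have := P1 (x1 :: p); rewrite /= /edge aa1 x1s pp; apply.
- by move=> p pp; have := P2 (x2 :: p); rewrite /= /edge aa2 x2s pp; apply.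
Qed.

Hypothesis Hacyc : forall v, ~ tc K v v.
Hypothesis Hcl : forall x y, x \in Lab -> y \in att K x -> y \in Lab.

Lemma inj_lab (C : tgraph F) :
  max_shared C ->
  (forall z, z \in Lab -> [/\ z \in nodes (tg C), lab (tg C) z = lab K z & att (tg C) z = att K z]) ->
  {in Lab &, injective phi}.
Proof.
move=> Hms HC u u' uL u'L e.
have [un _ _] := HC u uL; have [u'n _ _] := HC u' u'L.
apply: Hms => //; rewrite /term_of.
have Hatt : forall x, x \in Lab -> att (tg C) x = att K x.
  by move=> x xL; case: (HC x xL).
have Hsub : forall a, a \in Lab -> forall z,
    reach (tg (subt C a)) a z -> [/\ z \in Lab, lab (tg (subt C a)) z = lab K z
                                    & att (tg (subt C a)) z = att K z].
  move=> a aL z r.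
  have r1 : reach (tg C) a z := (reach_subg z (reach_refl (tg C) a)).1 r.
  have [_ zL] := reach_agree aL Hatt Hcl r1.
  have rb : reachb (tg C) a z by apply/reachbP.
  case: (HC z zL) => _ l1 a1.
  by rewrite /subt subg_lab // subg_att.
have Hpath : forall a, a \in Lab -> forall p,
    path (edge (tg (subt C a))) a p -> size p < (size (tg C)).+1.
  move=> a aL p pp.
  have [pp1 _] := @path_agree _ _ (reachb (tg C) a) a p
    (introT (reachbP _ _ _) (reach_refl _ _))
    (fun x xS => subg_att xS)
    (fun x y xS yx => introT (reachbP _ _ _)
        (reach_trans (elimT (reachbP _ _ _) xS) (reach_edge yx))) pp.
  have [pp2 allL] := path_agree aL Hatt Hcl pp1.
  have U := path_uniq_acyc Hacyc pp2.
  have : size (a :: p) <= size (nodes (tg C)).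
    apply: uniq_leq_size => // y; rewrite in_cons; case/orP => [/eqP->|yp].
      by case: (HC a aL).
    by have := allP allL y yp => /HC [].
  by rewrite /nodes size_map /= => h; apply: leqW.
apply: (@toterm_eq _ _ _ u u'); [exact: Hsub | exact: Hsub | exact: Hpath | exact: Hpath | exact: e].
Qed.
End TermEq.
End Lib2.


Section Rules.
Variables (F : finType) (ar : F -> nat) (isC : pred F) (nn : F -> nat).
Implicit Types (G M : lgraph F).

Lemma mem_Vsub G v z : (z \in Vsub G v) = (z \in nodes G) && reachb G v z.
Proof. by rewrite /Vsub mem_filter andbC. Qed.

Lemma att_none G x : lgraph_wf ar G -> lab G x = None -> att G x = [::].
Proof.
case=> _ _ Har _ Hl; case: (boolP (x \in nodes G)) => [xn|/att_notin //].
by apply/eqP; rewrite -size_eq0 Har // Hl.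
Qed.

Lemma wf_reach_nodes G a z : lgraph_wf ar G -> a \in nodes G -> reach G a z -> z \in nodes G.
Proof. by case=> _ Hc _ _; apply: reach_nodes. Qed.

Lemma nrmv_att G x : {subset nrmv nn G x <= att G x}.
Proof. by rewrite /nrmv; case: (lab G x) => // f y /mem_take. Qed.
Lemma safev_att G x : {subset safev nn G x <= att G x}.
Proof. by rewrite /safev; case: (lab G x) => // f y /mem_drop. Qed.
Lemma att_nrm_safe G x f : lab G x = Some f ->
  forall y, y \in att G x -> (y \in nrmv nn G x) || (y \in safev nn G x).
Proof. by move=> E y; rewrite /nrmv /safev E -mem_cat cat_take_drop. Qed.

Lemma nrmv_ext G M x : lab G x = lab M x -> att G x = att M x -> nrmv nn G x = nrmv nn M x.
Proof. by rewrite /nrmv => -> ->. Qed.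
Lemma safev_ext G M x : lab G x = lab M x -> att G x = att M x -> safev nn G x = safev nn M x.
Proof. by rewrite /safev => -> ->. Qed.

Lemma cap_shape (T0 : tgraph F) f : lab (tg T0) (rootg T0) = Some f ->
  tg (cap_nrm nn T0) = tg T0 \/ exists e rest, tg (cap_nrm nn T0) =
    e :: [seq x <- tg T0 | has (fun v => reachb (tg T0) v x.1)
            (take (nn f) (att (tg T0) (rootg T0))) && (x.1 != rootg T0)] ++ rest
    /\ e.1 = rootg T0.
Proof.
case: T0 => G rho /= E; rewrite /cap_nrm /= E; case: ifP => _.
  by right; do 2 eexists; split; reflexivity.
by left.
Qed.

Variable prec : rel F.
Hypothesis Hprec : forall c g, isC c -> ~~ prec g c.

Lemma pt_below (H G : tgraph F) : pt nn prec H G -> below prec H G.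
Proof. by case. Qed.

Lemma pt_constr (H G : tgraph F) : pt nn prec H G ->
  (forall f, lab (tg G) (rootg G) = Some f -> isC f) ->
  forall v, lab (tg H) v = None.
Proof.
move=> /pt_below Hb HC v; case E: (lab (tg H) v) => [g|] //.
have [f [Ef pgf]] := Hb v g (lab_mem E) E.
by have := Hprec g (HC f Ef); rewrite pgf.
Qed.

Variable R : rule F.
Hypothesis Rwf : rule_wf ar R.
Hypothesis Rc : constructor_rule isC R.
Hypothesis Rpt : pt nn prec (rhsg R) (lhsg R).

Local Notation K := (rK R).
Local Notation l := (rl R).
Local Notation r := (rr R).

Lemma Kwf : lgraph_wf ar K. Proof. by case: Rwf. Qed.
Lemma Kacyc : forall v, ~ tc K v v. Proof. by case: Kwf. Qed.
Lemma Kuniq : uniq (nodes K). Proof. by case: Kwf. Qed.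
Lemma Kcl : forall x, x \in nodes K -> {subset att K x <= nodes K}. Proof. by case: Kwf. Qed.
Lemma l_in : l \in nodes K. Proof. by case: Rwf. Qed.
Lemma r_in : r \in nodes K. Proof. by case: Rwf. Qed.

Lemma Kreach_nodes a z : a \in nodes K -> reach K a z -> z \in nodes K.
Proof. exact: wf_reach_nodes Kwf. Qed.

Lemma in_Vl z : reach K l z -> z \in Vsub K l.
Proof. by move=> H; rewrite mem_Vsub (Kreach_nodes l_in H); apply/reachbP. Qed.
Lemma Vl_reach z : z \in Vsub K l -> reach K l z.
Proof. by rewrite mem_Vsub => /andP [_ /reachbP]. Qed.
Lemma in_Vr z : reach K r z -> z \in Vsub K r.
Proof. by move=> H; rewrite mem_Vsub (Kreach_nodes r_in H); apply/reachbP. Qed.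
Lemma Vr_reach z : z \in Vsub K r -> reach K r z.
Proof. by rewrite mem_Vsub => /andP [_ /reachbP]. Qed.

Lemma lhs_lab z : reach K l z -> lab (tg (lhsg R)) z = lab K z.
Proof. by move=> H; apply: subg_lab; apply/reachbP. Qed.
Lemma lhs_att z : reach K l z -> att (tg (lhsg R)) z = att K z.
Proof. by move=> H; apply: subg_att; apply/reachbP. Qed.

Lemma lhs_root : exists2 f, lab K l = Some f & ~~ isC f.
Proof.
case: Rc => [[f [Ef nf]] _]; exists f => //.
by rewrite -lhs_lab // ; apply: reach_refl.
Qed.

Lemma nrmv_l : nrmv nn (tg (lhsg R)) (rootg (lhsg R)) = nrmv nn K l.
Proof. by apply: nrmv_ext; [apply: lhs_lab | apply: lhs_att]; apply: reach_refl. Qed.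

Definition P' z := z \in Vsub K l \/
  forall v, v \in nrmv nn K z -> exists2 v'', v'' \in nrmv nn K l & reach K v'' v.


Lemma pt_lhs H : pt nn prec H (lhsg R) ->
  (forall z, reach (tg H) (rootg H) z -> lab (tg H) z = lab K z /\ att (tg H) z = att K z) ->
  forall z, reach K (rootg H) z -> P' z.
Proof.
move=> Hpt; remember (lhsg R) as G eqn:EG; induction Hpt as [H G u Hb uG Hor|H G f Hb Ef Hn Hs IH]; subst G.
- move=> Q z rz.
  have ul : u \in att K l by rewrite -lhs_att //; apply: reach_refl.
  case: Hor => [[Er _ _]|Hpt'].
    left; apply: in_Vl; apply: reach_cons ul _; move: rz; rewrite Er.
    by [].
  have HC : forall f, lab (tg (subt (lhsg R) u)) (rootg (subt (lhsg R) u)) = Some f -> isC f.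
    move=> f Ef; case: Rc => _ /(_ u uG) Hc; exact: (Hc u f (lab_mem Ef) Ef).
  have Hnone := pt_constr Hpt' HC.
  have [Ql Qa] := Q _ (reach_refl _ _).
  have lK : lab K (rootg H) = None by rewrite -Ql Hnone.
  have aK := att_none Kwf lK.
  case: (reach_split rz) => [->|[x]]; last by rewrite aK.
  by right; rewrite /nrmv lK.
- move=> Q z rz.
  have [Ql Qa] := Q _ (reach_refl _ _).
  have En := nrmv_ext Ql Qa; have Es := safev_ext Ql Qa.
  have Hnrm : forall v, v \in nrmv nn K (rootg H) ->
      exists2 v'', v'' \in nrmv nn K l & reach K v'' v.
    move=> v; rewrite -En => /Hn [v'' [v''n [w [wn [Er _ _]]]]].
    exists v''; first by rewrite -nrmv_l.
    move: wn; rewrite /subt subg_nodes mem_Vsub => /andP [_ /reachbP rw].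
    have lv'' : reach K l v''.
      by apply: reach_edge; apply: (nrmv_att (G := K) (x := l)); rewrite -nrmv_l.
    have := (reach_subg w lv'').1 rw; rewrite /= in Er; by rewrite Er.
  case: (reach_split rz) => [->|[x xa rx]]; first by right.
  have EfK : lab K (rootg H) = Some f by rewrite -Ql.
  case/orP: (att_nrm_safe EfK xa) => [xn|xs].
    have [v'' v''n rv] := Hnrm x xn.
    left; apply: in_Vl; apply: reach_cons (nrmv_att v''n) _.
    exact: reach_trans rv rx.
  apply: (IH x _ erefl Rpt) => //; first by rewrite Es.
  move=> y ry.
  have rhx : reach (tg H) (rootg H) x by apply: reach_edge; rewrite Qa; exact: safev_att xs.
  have ry' : reach (tg H) x y := (reach_subg y (reach_refl (tg H) x)).1 ry.
  have rby : reachb (tg H) x y by apply/reachbP.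
  rewrite /subt subg_lab // subg_att //; apply: Q.
  exact: reach_trans rhx ry'.
Qed.

Lemma P'_rhs z : reach K r z -> P' z.
Proof.
apply: (pt_lhs Rpt) => y ry.
have ry' : reach K r y := (reach_subg y (reach_refl K r)).1 ry.
have rb : reachb K r y by apply/reachbP.
by rewrite /rhsg /= subg_lab // subg_att.
Qed.

Lemma newP u : u \in Vsub K r -> u \notin Vsub K l ->
  forall v, v \in nrmv nn K u -> exists2 v'', v'' \in nrmv nn K l & reach K v'' v.
Proof. by move=> /Vr_reach /P'_rhs [->|]. Qed.

Lemma nrml_reach v : v \in nrmv nn K l -> reach K l v.
Proof. by move=> H; apply: reach_edge; apply: nrmv_att H. Qed.

Lemma VU_sub : {subset Vunion K (nrmv nn K r) <= [seq y <- Vsub K r | y \in Vsub K l]}.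
Proof.
move=> y; rewrite mem_undup => /flatten_mapP [v vn]; rewrite mem_Vsub => /andP [yn /reachbP vy].
have rv : reach K r v by apply: reach_edge; apply: nrmv_att vn.
rewrite mem_filter; apply/andP; split; last first.
  by apply: in_Vr; apply: reach_trans rv vy.
case: (P'_rhs (reach_refl K r)) => [/Vl_reach lr|Hn].
  by apply: in_Vl; apply: reach_trans lr (reach_trans rv vy).
have [v'' v''n rv''] := Hn v vn.
by apply: in_Vl; apply: reach_trans (nrml_reach v''n) (reach_trans rv'' vy).
Qed.

Definition newl := [seq u <- Vsub K r | u \notin Vsub K l].

Lemma Vsub_uniq G v : uniq (nodes G) -> uniq (Vsub G v).
Proof. by move=> U; apply: filter_uniq. Qed.

Lemma size_rhs : size_tg (rhsg R) = size (Vsub K r).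
Proof. by rewrite /size_tg /rhsg subg_nodes. Qed.
Lemma size_lhs : size_tg (lhsg R) = size (Vsub K l).
Proof. by rewrite /size_tg /lhsg subg_nodes. Qed.

Lemma newl_le_r : size newl <= size (Vsub K r).
Proof. by rewrite size_filter count_size. Qed.

Lemma newl_le_l :
  size_tg (rhsg R) <= size_tg (lhsg R) + size (Vunion K (nrmv nn K r)) ->
  size newl <= size (Vsub K l).
Proof.
rewrite size_rhs size_lhs => H.
have H1 : size (Vunion K (nrmv nn K r)) <= size [seq y <- Vsub K r | y \in Vsub K l].
  by apply: uniq_leq_size; [apply: undup_uniq | apply: VU_sub].
have H2 := count_predC (fun y => y \in Vsub K l) (Vsub K r).
rewrite /newl size_filter in H1 *.
have : count (predC (fun y => y \in Vsub K l)) (Vsub K r) + count (fun y => y \in Vsub K l) (Vsub K r)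
   <= size (Vsub K l) + count (fun y => y \in Vsub K l) (Vsub K r).
  by rewrite addnC H2; apply: leq_trans H _; rewrite leq_add2l.
by rewrite leq_add2r => h; rewrite size_filter; exact: h.
Qed.

Definition LabP y := (y \in Vsub K l) && has (fun v => (lab K v != None) && reachb K v y) (nrmv nn K l).
Definition LabS := [seq y <- Vsub K l | LabP y].
Definition Xs := undup ([seq v <- nrmv nn K l | lab K v == None] ++ Vunion K (safev nn K l)).

Lemma Vl_cover : {subset Vsub K l <= l :: LabS ++ Xs}.
Proof.
move=> y yV; have ly := Vl_reach yV.
case: (reach_split ly) => [->|[x xa xy]]; first exact: mem_head.
have [f0 Ef0 _] := lhs_root.
rewrite in_cons mem_cat; apply/orP; right.
case/orP: (att_nrm_safe Ef0 xa) => [xn|xs].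
  case: (eqVneq (lab K x) None) => [E|NE].
    have aE := att_none Kwf E.
    case: (reach_split xy) => [->|[z]]; last by rewrite aE.
    apply/orP; right; rewrite mem_undup mem_cat mem_filter E eqxx xn //.
  apply/orP; left; rewrite mem_filter /LabP yV /= andbT; apply/hasP; exists x => //.
  by rewrite NE /=; apply/reachbP.
apply/orP; right; rewrite mem_undup mem_cat; apply/orP; right.
rewrite mem_undup; apply/flatten_mapP; exists x => //.
by move: yV; rewrite !mem_Vsub => /andP [-> _]; apply/reachbP.
Qed.

Lemma Vl_bound : size (Vsub K l) <= (size LabS + size Xs).+1.
Proof.
have := uniq_leq_size (Vsub_uniq l Kuniq) Vl_cover.
by rewrite /= size_cat.
Qed.


Lemma LabP_cl x y : LabP x -> y \in att K x -> LabP y.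
Proof.
case/andP => xV /hasP [v vn /andP [lv /reachbP vx]] yx.
have ry : reach K x y := reach_edge yx.
apply/andP; split.
  by apply: in_Vl; apply: reach_trans (Vl_reach xV) ry.
by apply/hasP; exists v => //; rewrite lv /=; apply/reachbP; apply: reach_trans vx ry.
Qed.

Lemma LabP_nl y : LabP y -> y != l.
Proof.
case/andP => _ /hasP [v vn /andP [_ /reachbP vy]].
apply/eqP => E; subst y; apply: (@Kacyc l); apply: reach_tc vy.
exact: nrmv_att vn.
Qed.

Lemma LabP_lab (Hii : forall v, v \in nrmv nn K l -> lab K v != None -> closed_tg (subg K v)) y :
  LabP y -> lab K y != None.
Proof.
case/andP => yV /hasP [v vn /andP [lv vy]].
have := Hii v vn lv y; rewrite subg_lab //; apply.
by rewrite subg_nodes mem_Vsub vy andbT; move: yV; rewrite mem_Vsub => /andP [].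
Qed.

Lemma cap_HC y : LabP y ->
  [/\ y \in nodes (tg (cap_nrm nn (lhsg R))), lab (tg (cap_nrm nn (lhsg R))) y = lab K y
    & att (tg (cap_nrm nn (lhsg R))) y = att K y].
Proof.
move=> Ly; have [f0 Ef0 _] := lhs_root.
have El : lab (tg (lhsg R)) (rootg (lhsg R)) = Some f0 by rewrite lhs_lab //; apply: reach_refl.
have yV : y \in Vsub K l by case/andP: Ly.
have yl := LabP_nl Ly.
have rly := Vl_reach yV.
have Ey : entry_of (tg (lhsg R)) y = entry_of K y.
  by apply: subg_entry; apply/reachbP.
suff Ey2 : y \in nodes (tg (cap_nrm nn (lhsg R))) /\ entry_of (tg (cap_nrm nn (lhsg R))) y = entry_of K y.
  by case: Ey2 => H1 H2; rewrite /lab /att H2.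
have [E|[e [rest [E e1]]]] := cap_shape El.
  by rewrite E Ey; split => //; rewrite /lhsg subg_nodes.
pose p x := has (fun v => reachb (tg (lhsg R)) v x)
                (take (nn f0) (att (tg (lhsg R)) (rootg (lhsg R)))) && (x != rootg (lhsg R)).
have py : p y.
  rewrite /p /= yl andbT.
  case/andP: Ly => _ /hasP [v vn /andP [_ /reachbP vy]].
  apply/hasP; exists v.
    by rewrite (lhs_att (reach_refl _ _)) -/(nrmv nn K l) /nrmv Ef0 in vn *.
  apply/reachbP; apply/(reach_subg y (nrml_reach vn)); exact: vy.
have Hk : y \in nodes [seq x <- tg (lhsg R) | p x.1].
  by rewrite (@nodes_filter F p) mem_filter py /lhsg subg_nodes.
rewrite E; split.
  by rewrite /nodes /= in_cons -/(nodes _) nodes_cat mem_cat -/(p _) Hk orbT.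
rewrite entry_of_cons e1 /= eq_sym (negbTE yl) entry_of_cat.
by rewrite -/(p _) Hk (@entry_of_filter F p) // Ey.
Qed.


Section Step.
Variables (G0 : tgraph F) (d : nat).
Definition R0 := Vunion (tg G0) (nrmv nn (tg G0) (rootg G0)).
Hypothesis R0C : forall y f, y \in R0 -> lab (tg G0) y = Some f -> isC f.
Hypothesis Hd_ar : forall f, ar f <= d.

Definition RT (M : lgraph F) z := forall y, reach M z y ->
  [/\ y \in R0, lab M y = lab (tg G0) y & att M y = att (tg G0) y].
Definition Inv (M : lgraph F) :=
  [/\ uniq (nodes M), (forall x, x \in nodes M -> {subset att M x <= nodes M}),
      (forall w v, w \in nodes M -> v \in nrmv nn M w -> RT M v) &
      (forall x, size (att M x) <= d)].

Variables (T : tgraph F) (phi c : nat -> nat).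
Hypothesis HT : Inv (tg T).
Hypothesis Hhom : homo K l (tg T) phi.
Hypothesis Hfr : fresh_ok R T c.

Local Notation M := (tg T).

Lemma hom_in u : u \in Vsub K l -> phi u \in nodes M.
Proof. by case/Hhom. Qed.
Lemma hom_lab u f : u \in Vsub K l -> lab K u = Some f ->
  lab M (phi u) = Some f /\ att M (phi u) = map phi (att K u).
Proof. by move=> uV; case: (Hhom uV) => _; apply. Qed.

Lemma l_Vl : l \in Vsub K l.
Proof. by apply: in_Vl; apply: reach_refl. Qed.

Lemma phil_lab : exists2 f, lab M (phi l) = Some f & ~~ isC f.
Proof.
have [f Ef nf] := lhs_root; exists f => //.
by case: (hom_lab l_Vl Ef).
Qed.

Lemma not_phil y : y \in R0 -> lab M y = lab (tg G0) y -> y != phi l.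
Proof.
move=> yR E; apply/eqP => Ey; have [f Ef nf] := phil_lab.
have : lab (tg G0) y = Some f by rewrite -E Ey.
by move/(R0C yR); rewrite (negbTE nf).
Qed.

Lemma homo_reach a b : a \in Vsub K l -> reach K a b -> reach M (phi a) (phi b).
Proof.
move=> aV rab.
suff : b \in Vsub K l /\ reach M (phi a) (phi b) by case.
move: b rab; apply: (@reach_ind _ K (fun b => b \in Vsub K l /\ reach M (phi a) (phi b)) a).
  by split => //; apply: reach_refl.
move=> x y _ [xV rx] yx; split.
  by apply: in_Vl; apply: reach_trans (Vl_reach xV) (reach_edge yx).
case E: (lab K x) => [g|]; last by rewrite (att_none Kwf E) in yx.
have [_ ax] := hom_lab xV E.
by apply: reach_trans rx (reach_edge _); rewrite ax map_f.
Qed.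

Lemma nrm_phil : nrmv nn M (phi l) = map phi (nrmv nn K l).
Proof.
have [f Ef _] := lhs_root; have [lt at_] := hom_lab l_Vl Ef.
by rewrite /nrmv lt Ef at_ map_take.
Qed.

Lemma RT_trans (N : lgraph F) a b : RT N a -> reach N a b -> RT N b.
Proof. by move=> H ab y rb; apply: H; apply: reach_trans ab rb. Qed.

Lemma RT_phi v : reach K l v -> (exists2 v'', v'' \in nrmv nn K l & reach K v'' v) -> RT M (phi v).
Proof.
move=> _ [v'' vn rv].
have [_ _ K2 _] := HT.
have vn' : phi v'' \in nrmv nn M (phi l) by rewrite nrm_phil map_f.
have H := K2 (phi l) (phi v'') (hom_in l_Vl) vn'.
apply: RT_trans H _; apply: homo_reach rv.
by apply: in_Vl; apply: nrml_reach.
Qed.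

Definition img u := if u \in Vsub K l then phi u else c u.
Definition NE := [seq (c u, (lab K u, map img (att K u))) | u <- newl].
Definition B := M ++ NE.
Definition redir w := if w == phi l then img r else w.
Definition B' := [seq (e.1, (e.2.1, map redir e.2.2)) | e <- B].
Definition root' := redir (rootg T).

Lemma SR_eq : step_result R T phi c = subg B' root'.
Proof. by []. Qed.

Lemma nodes_NE : nodes NE = map c newl.
Proof. by rewrite /nodes /NE -map_comp. Qed.
Lemma nodes_B : nodes B = nodes M ++ map c newl.
Proof. by rewrite /B nodes_cat nodes_NE. Qed.
Lemma nodes_B' : nodes B' = nodes B.
Proof. by rewrite nodes_map. Qed.

Lemma c_inj : {in newl &, injective c}. Proof. by case: Hfr. Qed.
Lemma c_fresh u : u \in newl -> c u \notin nodes M. Proof. by case: Hfr => _; apply. Qed.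

Lemma entry_NE u : u \in newl -> entry_of NE (c u) = (c u, (lab K u, map img (att K u))).
Proof.
move: c_inj; rewrite /NE; elim: newl u => [|x s IH] u //= Hi us.
rewrite entry_of_cons /=; case: eqP => [E|NE'].
  by rewrite (Hi x u) // ?mem_head.
apply: IH => //.
  by move=> a b ai bi; apply: Hi; rewrite in_cons ?ai ?bi orbT.
by move: us; rewrite in_cons => /orP [/eqP E|//]; case: NE'; rewrite E.
Qed.

Lemma entry_B_old x : x \in nodes M -> entry_of B x = entry_of M x.
Proof. by move=> xn; rewrite /B entry_of_cat xn. Qed.
Lemma entry_B_new u : u \in newl -> entry_of B (c u) = (c u, (lab K u, map img (att K u))).
Proof. by move=> un; rewrite /B entry_of_cat (negbTE (c_fresh un)) entry_NE. Qed.

Lemma lab_B' x : lab B' x = lab B x.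
Proof.
case: (boolP (x \in nodes B)) => xn.
  by rewrite /lab /B' (entry_of_map (g := fun e : entry F => (e.1, (e.2.1, map redir e.2.2)))).
by rewrite !lab_notin // nodes_B'.
Qed.
Lemma att_B' x : att B' x = map redir (att B x).
Proof.
case: (boolP (x \in nodes B)) => xn.
  by rewrite /att /B' (entry_of_map (g := fun e : entry F => (e.1, (e.2.1, map redir e.2.2)))).
by rewrite !att_notin // nodes_B'.
Qed.

Lemma nodes_B_cases x : x \in nodes B -> x \in nodes M \/ exists2 u, u \in newl & x = c u.
Proof.
rewrite nodes_B mem_cat => /orP [|/mapP [u ??]]; first by left.
by right; exists u.
Qed.

Lemma newl_Vr u : u \in newl -> u \in Vsub K r.
Proof. by rewrite mem_filter => /andP []. Qed.
Lemma newl_nVl u : u \in newl -> u \notin Vsub K l.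
Proof. by rewrite mem_filter => /andP []. Qed.

Lemma img_nodes u : u \in Vsub K r -> img u \in nodes B.
Proof.
move=> uV; rewrite /img nodes_B mem_cat; case: ifP => uL.
  by rewrite hom_in.
by apply/orP; right; apply: map_f; rewrite mem_filter uL uV.
Qed.

Lemma attB_nodes x y : y \in att B x -> y \in nodes B.
Proof.
move=> yx; have xn : x \in nodes B by apply: att_mem yx.
have [_ Hcl _ _] := HT.
case: (nodes_B_cases xn) => [xM|[u un Ex]].
  by move: yx; rewrite /att entry_B_old // -/(att _ _) nodes_B mem_cat => /(Hcl _ xM) ->.
move: yx; rewrite Ex; rewrite /att entry_B_new //= => /mapP [u' u'a ->].
apply: img_nodes; apply: in_Vr; apply: reach_trans (Vr_reach (newl_Vr un)) (reach_edge u'a).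
Qed.

Lemma redir_nodes y : y \in nodes B -> redir y \in nodes B.
Proof.
move=> yn; rewrite /redir; case: ifP => // _; apply: img_nodes.
by apply: in_Vr; apply: reach_refl.
Qed.

Lemma attB'_nodes x y : y \in att B' x -> y \in nodes B'.
Proof.
rewrite att_B' nodes_B' => /mapP [y0 y0x ->]; apply: redir_nodes.
exact: attB_nodes y0x.
Qed.

Lemma uniq_B' : uniq (nodes B').
Proof.
have [U _ _ _] := HT.
rewrite nodes_B' nodes_B cat_uniq U /=; apply/andP; split.
  apply/hasP => [[x /mapP [u un ->]]]; by rewrite (negbTE (c_fresh un)).
rewrite map_inj_in_uniq; first exact: filter_uniq (Vsub_uniq _ Kuniq).
exact: c_inj.
Qed.

Local Notation SR := (tg (subg B' root')).

Lemma SR_nodes x : (x \in nodes SR) = (x \in nodes B') && reachb B' root' x.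
Proof. by rewrite subg_nodes mem_Vsub. Qed.

Lemma SR_lab x : x \in nodes SR -> lab SR x = lab B x.
Proof. by rewrite SR_nodes => /andP [_ rb]; rewrite subg_lab // lab_B'. Qed.
Lemma SR_att x : x \in nodes SR -> att SR x = map redir (att B x).
Proof. by rewrite SR_nodes => /andP [_ rb]; rewrite subg_att // att_B'. Qed.

Lemma SR_closed x : x \in nodes SR -> {subset att SR x <= nodes SR}.
Proof.
move=> xn y; rewrite subg_att; last by move: xn; rewrite SR_nodes => /andP [].
move=> yx; rewrite SR_nodes (attB'_nodes yx) /=.
move: xn; rewrite SR_nodes => /andP [_ /reachbP rx]; apply/reachbP.
exact: reach_trans rx (reach_edge yx).
Qed.

Lemma SR_uniq : uniq (nodes SR).
Proof. by rewrite subg_nodes; apply: filter_uniq uniq_B'. Qed.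

Lemma SR_arity x : size (att SR x) <= d.
Proof.
have [_ _ _ HA] := HT.
case: (boolP (x \in nodes SR)) => xn; last by rewrite att_notin.
rewrite SR_att // size_map.
have : x \in nodes B by rewrite -nodes_B'; move: xn; rewrite SR_nodes => /andP [].
case/nodes_B_cases => [xM|[u un ->]].
  by rewrite /att entry_B_old // -/(att _ _).
rewrite /att entry_B_new //= size_map.
have [_ _ Har _] := Kwf; rewrite Har; last first.
  by have := newl_Vr un; rewrite mem_Vsub => /andP [].
by case: (lab K u) => //.
Qed.

Lemma RT_redir z0 y : RT M z0 -> reach M z0 y -> map redir (att M y) = att M y.
Proof.
move=> Hz ry; apply: map_id_in => y' y'a; rewrite /redir.
have [y'R l' _] := Hz y' (reach_trans ry (reach_edge y'a)).
by rewrite (negbTE (not_phil y'R l')).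
Qed.

Lemma region z0 : z0 \in nodes M -> z0 \in nodes SR -> RT M z0 -> RT SR z0.
Proof.
move=> z0M z0S Hz.
have [_ Hcl _ _] := HT.
have key : forall y, reach SR z0 y -> [/\ reach M z0 y, y \in nodes M & y \in nodes SR].
  apply: (@reach_ind _ SR (fun y => [/\ reach M z0 y, y \in nodes M & y \in nodes SR]) z0).
    by split => //; apply: reach_refl.
  move=> x y _ [rx xM xS] yx; have yS := SR_closed xS yx.
  move: yx; rewrite SR_att // /att entry_B_old // -/(att _ _) (RT_redir Hz rx) => yx.
  by split => //; [apply: reach_trans rx (reach_edge yx) | apply: Hcl xM _ yx].
move=> y ry; have [rMy yM yS] := key y ry.
have [yR ly ay] := Hz y rMy.
rewrite SR_lab // SR_att // /lab /att entry_B_old // -/(att _ _) -/(lab _ _).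
by rewrite (RT_redir Hz rMy).
Qed.

Lemma SR_nrmB w : w \in nodes SR -> nrmv nn SR w = nrmv nn B' w.
Proof.
by rewrite SR_nodes => /andP [_ rb]; apply: nrmv_ext; rewrite ?subg_lab ?subg_att.
Qed.

Lemma SR_nrm w v : w \in nodes SR -> v \in nrmv nn SR w -> v \in nodes M /\ RT M v.
Proof.
move=> wS; rewrite (SR_nrmB wS) /nrmv lab_B' att_B' -/(nrmv nn B w).
have [_ Hcl K2 _] := HT.
have wB : w \in nodes B by rewrite -nodes_B'; move: wS; rewrite SR_nodes => /andP [].
case: (nodes_B_cases wB) => [wM|[u un ->]].
  rewrite /lab /att entry_B_old // -/(att _ _) -/(lab _ _).
  case E: (lab M w) => [g|] //; rewrite -map_take => /mapP [v0 v0n ->].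
  have v0n' : v0 \in nrmv nn M w by rewrite /nrmv E.
  have Hv0 := K2 w v0 wM v0n'.
  have [v0R lv0 _] := Hv0 v0 (reach_refl _ _).
  rewrite /redir (negbTE (not_phil v0R lv0)); split => //.
  by apply: Hcl wM _ (mem_take v0n).
rewrite /lab /att entry_B_new //=.
case E: (lab K u) => [g|] //; rewrite -map_take -map_take => /mapP [v1 /mapP [v' v'n ->] ->].
have v'n' : v' \in nrmv nn K u by rewrite /nrmv E.
have [v'' v''n rv] := newP (newl_Vr un) (newl_nVl un) v'n'.
have lv' : reach K l v' := reach_trans (nrml_reach v''n) rv.
have v'L : v' \in Vsub K l := in_Vl lv'.
have Hv := RT_phi lv' (ex_intro2 _ _ v'' v''n rv).
have [vR lv _] := Hv _ (reach_refl _ _).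
rewrite /img v'L /redir (negbTE (not_phil vR lv)); split => //.
exact: hom_in.
Qed.

Lemma SR_Inv : Inv SR.
Proof.
split; [exact: SR_uniq | exact: SR_closed | | exact: SR_arity].
move=> w v wS vn; have [vM Hv] := SR_nrm wS vn.
apply: region => //.
apply: SR_closed wS _ _.
exact: nrmv_att vn.
Qed.

Lemma SR_size : size (nodes SR) <= size (nodes M) + size newl.
Proof.
rewrite subg_nodes /Vsub size_filter; apply: leq_trans (count_size _ _) _.
by rewrite nodes_B' nodes_B size_cat size_map.
Qed.


Lemma B'_arity x : size (att B' x) <= d.
Proof.
have [_ _ _ HA] := HT.
rewrite att_B' size_map.
case: (boolP (x \in nodes B)) => xn; last by rewrite att_notin.
case/nodes_B_cases: xn => [xM|[u un ->]].
  by rewrite /att entry_B_old // -/(att _ _).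
rewrite /att entry_B_new //= size_map.
have [_ _ Har _] := Kwf; rewrite Har; last first.
  by have := newl_Vr un; rewrite mem_Vsub => /andP [].
by case: (lab K u) => //.
Qed.

Lemma SR_size0 : d = 0 -> size (nodes SR) <= size (nodes M).
Proof.
move=> d0.
have H1 : size (nodes SR) <= size [:: root'].
  apply: uniq_leq_size SR_uniq _ => y; rewrite SR_nodes => /andP [_ /reachbP ry].
  case: (reach_split ry) => [->|[x]]; first exact: mem_head.
  by have := B'_arity root'; rewrite d0 leqn0 size_eq0 => /eqP ->.
apply: leq_trans H1 _.
by case: (nodes M) (hom_in l_Vl).
Qed.

Lemma newl_fin : size_tg (rhsg R) <= d -> size newl <= d.
Proof. by rewrite size_rhs => H; apply: leq_trans newl_le_r H. Qed.

Lemma newl_inf :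
  (forall v, v \in nrmv nn K l -> lab K v != None -> closed_tg (subg K v)) ->
  max_shared (cap_nrm nn (lhsg R)) ->
  size Xs <= d ->
  size_tg (rhsg R) <= size_tg (lhsg R) + size (Vunion K (nrmv nn K r)) ->
  size newl <= (size R0 + d).+1.
Proof.
move=> Hii Hms HX Hiv.
apply: leq_trans (newl_le_l Hiv) _; apply: leq_trans Vl_bound _.
rewrite ltnS; apply: leq_add => //.
have HL1 : forall z, z \in (LabP : pred nat) -> lab K z != None.
  by move=> z zL; apply: (LabP_lab Hii).
have HL2 : forall z, z \in (LabP : pred nat) ->
    lab M (phi z) = lab K z /\ att M (phi z) = map phi (att K z).
  move=> z zL; case E: (lab K z) (HL1 z zL) => [f|] // _.
  have zV : z \in Vsub K l by case/andP: (zL : LabP z).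
  by have [-> ->] := hom_lab zV E.
have Hcl : forall x y, x \in (LabP : pred nat) -> y \in att K x -> y \in (LabP : pred nat).
  by move=> x y xL yx; apply: (LabP_cl xL yx).
have HC : forall z, z \in (LabP : pred nat) ->
    [/\ z \in nodes (tg (cap_nrm nn (lhsg R))), lab (tg (cap_nrm nn (lhsg R))) z = lab K z
       & att (tg (cap_nrm nn (lhsg R))) z = att K z].
  by move=> z zL; apply: cap_HC.
have Hinj := inj_lab HL1 HL2 Kacyc Hcl Hms HC.
rewrite -(size_map phi LabS); apply: uniq_leq_size.
  rewrite map_inj_in_uniq; first exact: filter_uniq (Vsub_uniq _ Kuniq).
  by move=> a b; rewrite !mem_filter => /andP [La _] /andP [Lb _]; apply: Hinj.
move=> z /mapP [y yL ->]; rewrite mem_filter in yL; case/andP: yL => Ly yV.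
case/andP: (Ly) => _ /hasP [v vn /andP [_ /reachbP vy]].
by case: (RT_phi (Vl_reach yV) (ex_intro2 _ _ v vn vy) (reach_refl _ _)).
Qed.

End Step.

End Rules.

Section Final.
Variables (F : finType) (ar : F -> nat) (isC : pred F) (nn : F -> nat).

Lemma reach_ext (M1 M2 : lgraph F) a z : (forall x, att M1 x = att M2 x) ->
  reach M1 a z -> reach M2 a z.
Proof.
move=> E r.
by case: (@reach_agree F M1 M2 predT a z isT (fun x _ => E x) (fun _ _ _ _ => isT) r).
Qed.

Lemma tgeq_fun (H S : tgraph F) : tg_eq H S ->
  [/\ nodes (tg H) =i nodes (tg S), (forall x, lab (tg H) x = lab (tg S) x)
    & (forall x, att (tg H) x = att (tg S) x)].
Proof.
case=> _ P E; have Hm := perm_mem P; split => // x;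
  case: (boolP (x \in nodes (tg H))) => xn; try by case: (E x xn).
  by rewrite !lab_notin // -Hm.
by rewrite !att_notin // -Hm.
Qed.

Lemma Inv_ext G0 d (H S : tgraph F) : tg_eq H S -> Inv nn G0 d (tg S) -> Inv nn G0 d (tg H).
Proof.
move=> Heq; have [Hm Hl Ha] := tgeq_fun Heq; case: Heq => _ P _.
case=> U Cl K2 A; split.
- by rewrite (perm_uniq P).
- move=> x xn y; rewrite Ha Hm => yx; apply: Cl yx; by move: xn; rewrite Hm.
- move=> w v wn; rewrite (nrmv_ext nn (Hl w) (Ha w)) => vn y ry.
  have ry' : reach (tg S) v y by apply: reach_ext ry.
  rewrite Hm in wn; have [? ? ?] := K2 w v wn vn y ry'.
  by rewrite Hl Ha.
- by move=> x; rewrite Ha.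
Qed.

Hypothesis HnnC : forall f, isC f -> nn f = 0.

Lemma R0C_G0 (G0 : tgraph F) : basic isC G0 ->
  forall y f, y \in R0 nn G0 -> lab (tg G0) y = Some f -> isC f.
Proof.
case=> _ Hb y f; rewrite /R0 mem_undup => /flatten_mapP [v vn yV] E.
have := Hb v (nrmv_att vn) y f; rewrite /subt subg_nodes; apply => //.
by rewrite subg_lab //; move: yV; rewrite mem_Vsub => /andP [].
Qed.

Lemma Inv_G0 (G0 : tgraph F) d : is_tg ar G0 -> basic isC G0 -> (forall f, ar f <= d) ->
  Inv nn G0 d (tg G0).
Proof.
case=> Hwf rin Hr Hb Hd; have [U Cl Har _] := Hwf; split => //.
- move=> w v wn vn y ry; split => //.
  have wroot : w = rootg G0.
    case: (reach_split (elimT (reachbP _ _ _) (Hr w wn))) => [//|[x xa xw]].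
    move: vn; rewrite /nrmv; case E: (lab (tg G0) w) => [g|] //.
    have := (proj2 Hb) x xa w g; rewrite /subt subg_nodes mem_Vsub wn /= subg_lab; last exact/reachbP.
    by move=> /(_ (introT (reachbP _ _ _) xw) E) /HnnC ->; rewrite take0.
  subst w; rewrite /R0 mem_undup; apply/flatten_mapP; exists v => //.
  rewrite mem_Vsub; apply/andP; split; last exact/reachbP.
  exact: (reach_nodes Cl (Cl _ rin _ (nrmv_att vn)) ry).
- move=> x; case: (boolP (x \in nodes (tg G0))) => xn; last by rewrite att_notin.
  by rewrite Har //; case: (lab _ x).
Qed.

End Final.

Theorem mainTheorem6
  (F : finType) (ar : F -> nat) (isC : pred F) (nn : F -> nat)
  (Hnn : forall f, nn f <= ar f) (HnnC : forall f, isC f -> nn f = 0)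
  (S : GRS F)
  (Hwf : forall R, S R -> rule_wf ar R)
  (Hconstr : forall R, S R -> constructor_rule isC R)
  (Hpt : exists prec : rel F, precedence isC prec /\
           forall R, S R -> pt nn prec (rhsg R) (lhsg R))
  (d : nat)
  (Hd_ar : forall f, ar f <= d)
  (Hd_fin : forall R, S R -> ~ in_Ginf S R -> size_tg (rhsg R) <= d)
  (Hi : forall R, S R -> in_Ginf S R -> max_shared (cap_nrm nn (lhsg R)))
  (Hii : forall R, S R -> in_Ginf S R ->
     forall v, v \in nrmv nn (rK R) (rl R) -> lab (rK R) v != None ->
       closed_tg (subg (rK R) v))
  (Hiii : forall R, S R -> in_Ginf S R ->
     size (undup ([seq v <- nrmv nn (rK R) (rl R) | lab (rK R) v == None]
                  ++ Vunion (rK R) (safev nn (rK R) (rl R)))) <= d)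
  (Hiv : forall R, S R -> in_Ginf S R ->
     size_tg (rhsg R) <= size_tg (lhsg R) + size (Vunion (rK R) (nrmv nn (rK R) (rr R))))
  (G0 : tgraph F) (HG0 : is_tg ar G0) (HG0c : closed_tg G0) (HG0b : basic isC G0)
  (n : nat) (G : tgraph F) :
  steps S n G0 G ->
  size_tg G <= size_tg G0 + n * (size (Vunion (tg G0) (nrmv nn (tg G0) (rootg G0))) + 2 * d).
Proof.
have [prec [[_ _ _ Hprec] Hpts]] := Hpt.
set B0 := _ + 2 * d.
have R0C := R0C_G0 (nn:=nn) HG0b.
suff: forall n T G, Inv nn G0 d (tg T) -> steps S n T G -> size_tg G <= size_tg T + n * B0.
  move=> Hm Hst; apply: (Hm n G0 G _ Hst); exact: (Inv_G0 HnnC HG0 HG0b Hd_ar).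
elim => [|k IH] T G' HT /=; first by move=> ->; rewrite addn0.
case=> T' [[R [phi [c [SR Hh Hf Heq]]]] Hs].
rewrite SR_eq in Heq.
have HT' : Inv nn G0 d (tg T').
  apply: Inv_ext Heq _.
  exact: (SR_Inv Hprec (Hwf R SR) (Hconstr R SR) (Hpts R SR) R0C Hd_ar HT Hh Hf).
have hs : size_tg T' <= size_tg T + B0.
  have Hsz : size_tg T' = size (nodes (tg (subg (B' R T phi c) (root' R T phi c)))).
    by case: Heq => _ P _; rewrite /size_tg (perm_size P).
  rewrite Hsz.
  case: (eqVneq d 0) => [d0|dn0].
    apply: leq_trans (SR_size0 (Hwf R SR) Hd_ar HT Hh Hf d0) _; exact: leq_addr.
  apply: leq_trans (SR_size R T phi c) _; rewrite /size_tg leq_add2l.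
  case: (classic (in_Ginf S R)) => Hin.
    have := newl_inf Hprec (Hwf R SR) (Hconstr R SR) (Hpts R SR) HT Hh
      (Hii R SR Hin) (Hi R SR Hin) (Hiii R SR Hin) (Hiv R SR Hin).
    move=> h; apply: leq_trans h _; rewrite /B0 /R0.
    by rewrite -addn1 -addnA leq_add2l mul2n -addnn leq_add2l; rewrite lt0n.
  apply: leq_trans (newl_fin (Hd_fin R SR Hin)) _.
  by rewrite /B0 (leq_trans _ (leq_addl _ _)) // mul2n -addnn leq_addr.
apply: leq_trans (IH _ _ HT' Hs) _.
by rewrite mulSn addnA leq_add2r.
Qed.
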